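(* Let $r>0$ and let $f\in\mathcal S(\mathbb{R}^2)$. Let $g=\mathcal F f$ be its equidistant-detector fan-beam transform with source radius $r$, i.e. for $(s,\beta)\in\mathbb{R}\times\mathbb{R}$, $$g(s,\beta)=\int_0^\infty f\Big(r\theta_\beta+t\,\frac{s\theta_\beta^\perp-r\theta_\beta}{\|s\theta_\beta^\perp-r\theta_\beta\|_2}\Big)\,dt,\qquad \theta_\beta=(\cos\beta,\sin\beta),\ \theta_\beta^\perp=(-\sin\beta,\cos\beta).$$ Let $h^*\in\mathbb{R}$ and define the misaligned sinogram $\tilde g(s,\beta)=g(s-h^*,\beta)$. Define, for $s\in\mathbb{R}$, $$\tilde p(s)=\int_0^{2\pi}\tilde g(s,\beta)\,d\beta,\qquad w(s)=\int_0^{2\pi}\tilde g\Big(-s,\ \beta+\pi+2\arctan\frac{s}{r}\Big)\,d\beta .$$ Then $\tilde p(s)=w(s-2h^* )$ for all $s\in\mathbb{R}$.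
   Context: $\mathcal S(\mathbb{R}^2)$ denotes the Schwartz space of rapidly decreasing functions on $\mathbb{R}^2$. The fan-beam transform $g=\mathcal F f$ gives the integral of $f$ along the ray starting at the source point $r\theta_\beta$ and passing through the detector point $s\theta_\beta^\perp$ (the detector coordinate axis passes through the origin); the angle $\beta$ is the polar angle of the source direction, so $g$ and $\tilde g$ are $2\pi$-periodic in $\beta$. The translation $\tilde g(s,\beta)=g(s-h^*,\beta)$ models a shift of the center of rotation by the (unknown) amount $h^*$ along the detector. *)

(* Defs.v *)
From Stdlib Require Import Reals List.
From Coquelicot Require Import Coquelicot.
Open Scope R_scope.

(* Iterated partial derivatives of f : R -> R -> R indexed by a word:
   true = d/dx, false = d/dy; the head of the list is applied last. *)
Fixpoint Dw (w : list bool) (f : R -> R -> R) : R -> R -> R :=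
  match w with
  | nil => f
  | b :: w' =>
      let g := Dw w' f in
      if b then (fun x y => Derive (fun t => g t y) x)
      else (fun x y => Derive (fun t => g x t) y)
  end.

Definition schwartz (f : R -> R -> R) : Prop :=
  (forall w x y,
      ex_derive (fun t => Dw w f t y) x /\ ex_derive (fun t => Dw w f x t) y) /\
  (forall w x y,
      continuous (fun p : R * R => Dw w f (fst p) (snd p)) (x, y)) /\
  (forall w (a b : nat), exists C : R,
      forall x y, Rabs (x ^ a * y ^ b * Dw w f x y) <= C).

Definition fanbeam (r : R) (f : R -> R -> R) (s beta : R) : R :=
  let dx := - s * sin beta - r * cos beta in
  let dy := s * cos beta - r * sin beta in
  let N := sqrt (dx ^ 2 + dy ^ 2) in
  RInt_gen (fun t => f (r * cos beta + t * (dx / N)) (r * sin beta + t * (dy / N)))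
    (at_point 0) (Rbar_locally p_infty).

(* Main.v *)
Require Import Defs.
From Stdlib Require Import Reals.
From Coquelicot Require Import Coquelicot.
From Stdlib Require Import Lra Psatz FunctionalExtensionality.
Open Scope R_scope.

Definition jc (h : R -> R -> R) :=
  forall x y, continuous (fun z : R * R => h (fst z) (snd z)) (x, y).

Lemma jc_swap h : jc h -> jc (fun x y => h y x).
Proof.
  intros H x y.
  apply (continuous_comp_2 snd fst h (x,y)).
  - apply continuous_snd.
  - apply continuous_fst.
  - apply H.
Qed.

Lemma jc_cont1 h : jc h -> forall y x, continuous (fun x => h x y) x.
Proof.
  intros H y x.
  apply (continuous_comp_2 (fun x => x) (fun _ => y) h x).
  - apply continuous_id.
  - apply continuous_const.
  - apply H.
Qed.

Lemma jc_2d h : jc h -> forall x y, continuity_2d_pt h x y.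
Proof. intros H x y. apply continuity_2d_pt_filterlim. apply H. Qed.

Lemma ball_R (x e y : R) : ball x e y <-> Rabs (y - x) < e.
Proof. reflexivity. Qed.

Lemma abs_RInt_bound (g : R -> R) a b K :
  ex_RInt g a b -> (forall x, Rmin a b <= x <= Rmax a b -> Rabs (g x) <= K) ->
  Rabs (RInt g a b) <= (Rmax a b - Rmin a b) * K.
Proof.
  intros He Hb. destruct (Rle_dec a b) as [Hab|Hab].
  - rewrite Rmin_left, Rmax_right in * by lra.
    apply abs_RInt_le_const; auto.
  - assert (Hs: ex_RInt g b a) by (apply ex_RInt_swap; auto).
    rewrite Rmin_right, Rmax_left in * by lra.
    rewrite <- opp_RInt_swap by auto.
    change (Rabs (- RInt g b a) <= (a - b) * K).
    rewrite Rabs_Ropp. apply abs_RInt_le_const.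
    + lra.
    + apply ex_RInt_swap; auto.
    + intros; apply Hb; lra.
Qed.

Lemma jc_exRInt h : jc h -> forall y a b, ex_RInt (fun x => h x y) a b.
Proof. intros H y a b. apply (@ex_RInt_continuous R_CompleteNormedModule). intros; apply jc_cont1; auto. Qed.

Lemma param_cont h : jc h -> forall a b c,
  continuous (fun y => RInt (fun x => h x y) a b) c.
Proof.
  intros H a b c.
  apply filterlim_locally. intros eps.
  set (m := Rmin a b). set (M := Rmax a b).
  assert (HmM : m <= M) by (unfold m, M; apply Rminmax).
  assert (Hp : 0 < eps / (M - m + 1)) by (apply Rdiv_lt_0_compat; [apply cond_pos|lra]).
  destruct (uniform_continuity_2d_1d h m M c (fun x _ => jc_2d h H x c) (mkposreal _ Hp)) as [d Hd].
  exists d. intros y Hy. apply ball_R. apply ball_R in Hy.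
  simpl in Hd.
  rewrite <- (RInt_minus (fun x => h x y) (fun x => h x c)) by (apply jc_exRInt; auto).
  eapply Rle_lt_trans.
  apply abs_RInt_bound.
  { apply (ex_RInt_minus (fun x => h x y) (fun x => h x c)); apply jc_exRInt; auto. }
  { intros x Hx. left. 
    assert (Hy' : Rabs (y - c) < d) by exact Hy.
    pose proof (cond_pos d).
    rewrite Rabs_lt_between in Hy'.
    apply (Hd x c x y); unfold m, M in *; try lra.
    rewrite Rminus_eq_0, Rabs_R0. apply cond_pos. }
  change (Rmax a b) with M; change (Rmin a b) with m.
  replace ((M - m) * (eps / (M - m + 1))) with (eps - eps / (M - m + 1)) by (field; lra).
  lra.
Qed.

Lemma ftc_jc h : jc h -> forall a t x,
  is_derive (fun u => RInt (fun b => h b t) a u) x (h x t).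
Proof.
  intros H a t x.
  apply (is_derive_RInt (fun b => h b t) (fun u => RInt (fun b => h b t) a u) a x).
  - apply filter_forall. intros y. apply (@RInt_correct R_CompleteNormedModule).
    apply jc_exRInt; auto.
  - apply jc_cont1; auto.
Qed.

Lemma fubini_fin h : jc h -> forall a b T,
  RInt (fun x => RInt (fun t => h x t) 0 T) a b =
  RInt (fun t => RInt (fun x => h x t) a b) 0 T.
Proof.
  intros H a b T.
  set (K := fun x => RInt (fun t => RInt (fun y => h y t) a x) 0 T).
  assert (HK : forall x, is_derive K x (RInt (fun t => h x t) 0 T)).
  { intros x.
    assert (HD : forall x t, Derive (fun u => RInt (fun y => h y t) a u) x = h x t).
    { intros; apply is_derive_unique; apply ftc_jc; auto. }
    assert (E : RInt (fun t => h x t) 0 T =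
                RInt (fun t => Derive (fun u => RInt (fun y => h y t) a u) x) 0 T).
    { apply RInt_ext. intros; rewrite HD; auto. }
    rewrite E. unfold K.
    apply (is_derive_RInt_param (fun x t => RInt (fun y => h y t) a x)).
    - apply filter_forall. intros x0 t _. eexists. apply ftc_jc; auto.
    - intros t _. apply continuity_2d_pt_ext with (f := h).
      + intros; rewrite HD; auto.
      + apply jc_2d; auto.
    - apply filter_forall. intros y.
      apply (@ex_RInt_continuous R_CompleteNormedModule).
      intros z _. apply param_cont; auto. }
  assert (HI := is_RInt_derive K (fun x => RInt (fun t => h x t) 0 T) a b
                 (fun x _ => HK x)
                 (fun x _ => param_cont (fun x y => h y x) (jc_swap h H) 0 T x)).
  apply is_RInt_unique in HI. rewrite HI.
  assert (Ka : K a = 0).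
  { unfold K. rewrite (RInt_ext _ (fun _ => 0)).
    - rewrite RInt_const. apply Rmult_0_r.
    - intros. apply (RInt_point a (fun y => h y x)). }
  rewrite Ka. unfold K. change (minus ?x 0) with (x - 0). apply Rminus_0_r.
Qed.

Lemma RInt_dom (M T T' : R) : 0 <= T <= T' ->
  RInt (fun t => M / (1 + t) ^ 2) T T' = M * (/ (1 + T) - / (1 + T')).
Proof.
  intros HT.
  assert (HI : is_RInt (fun t => M / (1 + t) ^ 2) T T'
             (minus ((fun t => - M / (1 + t)) T') ((fun t => - M / (1 + t)) T))).
  { apply (@is_RInt_derive R_CompleteNormedModule (fun t => - M / (1 + t)) (fun t => M / (1 + t) ^ 2)).
    - intros x Hx. rewrite Rmin_left, Rmax_right in Hx by lra.
      auto_derive. lra. field. lra.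
    - intros x Hx. rewrite Rmin_left, Rmax_right in Hx by lra.
      apply (@ex_derive_continuous R_AbsRing R_NormedModule).
      auto_derive. rewrite Rmult_1_r; apply Rmult_integral_contrapositive; split; lra. }
  rewrite (is_RInt_unique _ _ _ _ HI).
  change (minus ?a ?b) with (a - b). cbv beta. assert (E : - M / (1 + T') - - M / (1 + T) = M * (/ (1 + T) - / (1 + T'))) by (field; lra). exact E.
Qed.

Lemma tail_bound (f : R -> R) M :
  (forall t, continuous f t) -> (forall t, 0 <= t -> Rabs (f t) <= M / (1 + t) ^ 2) ->
  forall T T', 0 <= T <= T' ->
  Rabs (RInt f 0 T' - RInt f 0 T) <= M * (/ (1 + T) - / (1 + T')).
Proof.
  intros Hc Hb T T' HT.
  assert (Hex : forall a b, ex_RInt f a b).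
  { intros; apply (@ex_RInt_continuous R_CompleteNormedModule); intros; auto. }
  rewrite <- (RInt_Chasles f 0 T T') by auto.
  change (plus ?a ?b) with (a + b).
  assert (E : forall x y : R, x + y - x = y) by (intros; ring). rewrite E.
  rewrite <- RInt_dom by auto.
  eapply Rle_trans. apply abs_RInt_le. lra. auto.
  apply RInt_le. lra.
  apply (ex_RInt_norm f); auto.
  apply (@ex_RInt_continuous R_CompleteNormedModule). intros z Hz.
  rewrite Rmin_left, Rmax_right in Hz by lra.
  apply (@ex_derive_continuous R_AbsRing R_NormedModule). auto_derive. rewrite Rmult_1_r; apply Rmult_integral_contrapositive; split; lra.
  intros x Hx. apply Hb. lra.
Qed.

Lemma gen_of_lim (f : R -> R) l :
  (forall a b, ex_RInt f a b) ->
  filterlim (fun T => RInt f 0 T) (Rbar_locally p_infty) (locally l) ->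
  is_RInt_gen f (at_point 0) (Rbar_locally p_infty) l.
Proof.
  intros Hex Hl.
  apply (filterlimi_lim_ext (fun ab : R * R => RInt f (fst ab) (snd ab))).
  - intros [a b]. simpl. apply (@RInt_correct R_CompleteNormedModule). auto.
  - apply filterlim_locally. intros eps.
    apply filterlim_locally with (eps := eps) in Hl.
    apply Filter_prod with (Q := fun a => a = 0) (R := fun T => ball l eps (RInt f 0 T)).
    + reflexivity.
    + exact Hl.
    + intros x y Hx Hy. simpl. subst x. exact Hy.
Qed.

Lemma improper (f : R -> R) M :
  (forall t, continuous f t) -> (forall t, 0 <= t -> Rabs (f t) <= M / (1 + t) ^ 2) ->
  filterlim (fun T => RInt f 0 T) (Rbar_locally p_infty)
     (locally (RInt_gen f (at_point 0) (Rbar_locally p_infty)))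
  /\ forall T, 0 <= T ->
     Rabs (RInt_gen f (at_point 0) (Rbar_locally p_infty) - RInt f 0 T) <= M / (1 + T).
Proof.
  intros Hc Hb.
  assert (Hex : forall a b, ex_RInt f a b).
  { intros; apply (@ex_RInt_continuous R_CompleteNormedModule); intros; auto. }
  assert (HM : 0 <= M).
  { specialize (Hb 0 (Rle_refl 0)). pose proof (Rabs_pos (f 0)).
    replace ((1 + 0) ^ 2) with 1 in Hb by ring. lra. }
  assert (Htb := tail_bound f M Hc Hb).
  assert (Htb' : forall T T', 0 <= T <= T' -> Rabs (RInt f 0 T' - RInt f 0 T) <= M / (1 + T)).
  { intros T T' HT. eapply Rle_trans. apply Htb; auto.
    assert (0 < / (1 + T')) by (apply Rinv_0_lt_compat; lra).
    unfold Rdiv. nra. }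
  assert (Htb2 : forall T T', 0 <= T -> 0 <= T' -> Rabs (RInt f 0 T' - RInt f 0 T) <= M / (1 + Rmin T T')).
  { intros T T' H1 H2. destruct (Rle_dec T T').
    - rewrite Rmin_left by lra. apply Htb'; lra.
    - rewrite Rmin_right by lra. rewrite Rabs_minus_sym. apply Htb'; lra. }
  destruct (proj1 (filterlim_locally_cauchy (F := Rbar_locally p_infty) (fun T => RInt f 0 T))) as [l Hl].
  { intros eps. exists (fun T => M / eps < T). split.
    - exists (M / eps). auto.
    - intros u v Hu Hv. apply ball_R.
      assert (Heps := cond_pos eps).
      assert (0 <= M / eps) by (apply Rdiv_le_0_compat; lra).
      eapply Rle_lt_trans. apply Htb2; lra.
      apply Rle_lt_trans with (M / (1 + M / eps)).
      + unfold Rdiv. apply Rmult_le_compat_l; auto.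
        apply Rinv_le_contravar. lra.
        apply Rplus_le_compat_l. apply Rmin_glb; lra.
      + apply (Rmult_lt_reg_r (1 + M / eps)). lra.
        unfold Rdiv. rewrite Rmult_assoc, Rinv_l by lra.
        replace (eps * (1 + M * / eps)) with (eps + M) by (field; lra). lra. }
  assert (Hg := gen_of_lim f l Hex Hl).
  rewrite (is_RInt_gen_unique _ _ Hg).
  split; auto.
  intros T HT.
  apply Rle_plus_epsilon. intros eps Heps.
  apply filterlim_locally with (eps := mkposreal eps Heps) in Hl.
  destruct Hl as [A HA].
  set (T' := Rmax (A + 1) T).
  specialize (HA T' ltac:(unfold T'; pose proof (Rmax_l (A+1) T); lra)).
  assert (HA2 : Rabs (RInt f 0 T' - l) < eps) by exact HA.
  specialize (Htb' T T' ltac:(unfold T'; pose proof (Rmax_r (A+1) T); lra)).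
  replace (l - RInt f 0 T) with ((RInt f 0 T' - RInt f 0 T) - (RInt f 0 T' - l)) by ring.
  eapply Rle_trans. apply Rabs_triang. rewrite Rabs_Ropp. lra.
Qed.

Lemma fubini_lim h M a b : jc h ->
  (forall x t, 0 <= t -> Rabs (h x t) <= M / (1 + t) ^ 2) ->
  filterlim (fun T => RInt (fun t => RInt (fun x => h x t) a b) 0 T) (Rbar_locally p_infty)
    (locally (RInt (fun x => RInt_gen (fun t => h x t) (at_point 0) (Rbar_locally p_infty)) a b)).
Proof.
  intros Hj Hb.
  set (G := fun x => RInt_gen (fun t => h x t) (at_point 0) (Rbar_locally p_infty)).
  set (GT := fun (T : R) x => RInt (fun t => h x t) 0 T).
  assert (Hc : forall x t, continuous (fun t => h x t) t).
  { intros x t. apply (jc_cont1 (fun x y => h y x) (jc_swap h Hj) x t). }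
  assert (HM : 0 <= M).
  { specialize (Hb 0 0 (Rle_refl 0)). pose proof (Rabs_pos (h 0 0)).
    replace ((1 + 0) ^ 2) with 1 in Hb by ring. lra. }
  destruct (filterlim_RInt GT a b (Rbar_locally p_infty) (Rbar_locally_filter _) G
             (fun T => RInt (GT T) a b)) as [If [HIf1 HIf2]].
  - intros T. apply (@RInt_correct R_CompleteNormedModule).
    apply (@ex_RInt_continuous R_CompleteNormedModule). intros z _.
    apply (param_cont (fun x y => h y x) (jc_swap h Hj) 0 T z).
  - apply filterlim_locally. intros eps.
    exists (M / eps). intros T HT. intros x.
    assert (Heps := cond_pos eps).
    assert (0 <= M / eps) by (apply Rdiv_le_0_compat; lra).
    change (Rabs (GT T x - G x) < eps).
    rewrite Rabs_minus_sym.
    eapply Rle_lt_trans. apply (proj2 (improper (fun t => h x t) M (Hc x) (Hb x))). lra.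
    apply Rle_lt_trans with (M / (1 + M / eps)).
    + unfold Rdiv. apply Rmult_le_compat_l; auto.
      apply Rinv_le_contravar; lra.
    + apply (Rmult_lt_reg_r (1 + M / eps)). lra.
      unfold Rdiv. rewrite Rmult_assoc, Rinv_l by lra.
      replace (eps * (1 + M * / eps)) with (eps + M) by (field; lra). lra.
  - rewrite (is_RInt_unique _ _ _ _ HIf2).
    eapply filterlim_ext; [|exact HIf1].
    intros T. simpl. unfold GT. apply fubini_fin. auto.
Qed.

Lemma period_shift (F : R -> R) :
  (forall x, continuous F x) -> (forall x, F (x + 2 * PI) = F x) ->
  forall c, RInt (fun x => F (x + c)) 0 (2 * PI) = RInt F 0 (2 * PI).
Proof.
  intros Hc Hp c.
  assert (Hex : forall a b, ex_RInt F a b).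
  { intros; apply (@ex_RInt_continuous R_CompleteNormedModule); intros; auto. }
  assert (L1 : forall d a b, RInt (fun x => F (x + d)) a b = RInt F (a + d) (b + d)).
  { intros d a b.
    rewrite <- (Rmult_1_l a) at 2. rewrite <- (Rmult_1_l b) at 2.
    rewrite <- (RInt_comp_lin F 1 d a b) by (apply Hex).
    apply RInt_ext. intros x _. change (scal 1 ?y) with (1 * y).
    rewrite !Rmult_1_l. reflexivity. }
  rewrite L1, Rplus_0_l.
  assert (L2 : RInt F (2 * PI) (2 * PI + c) = RInt F 0 c).
  { replace (RInt F 0 c) with (RInt (fun x => F (x + 2 * PI)) 0 c).
    - rewrite L1. f_equal; ring.
    - apply RInt_ext. intros; apply Hp. }
  rewrite <- (RInt_Chasles F c 0 (2 * PI + c)) by auto.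
  rewrite <- (RInt_Chasles F 0 (2 * PI) (2 * PI + c)) by auto.
  rewrite L2. rewrite <- (opp_RInt_swap F 0 c) by auto.
  change (plus ?a ?b) with (a + b). change (opp ?a) with (- a).
  assert (E : forall x y : R, - x + (y + x) = y) by (intros; ring).
  apply E.
Qed.

Lemma angle (p q : R) : p ^ 2 + q ^ 2 = 1 -> exists th, cos th = p /\ sin th = q.
Proof.
  intros H.
  assert (Hp : -1 <= p <= 1) by (split; nra).
  assert (Hs : sqrt (1 - p²) = Rabs q).
  { rewrite <- sqrt_Rsqr_abs. f_equal. unfold Rsqr. nra. }
  destruct (Rle_dec 0 q).
  - exists (acos p). rewrite cos_acos, sin_acos by auto. rewrite Hs, Rabs_pos_eq by auto. auto.
  - exists (- acos p). rewrite cos_neg, sin_neg, cos_acos, sin_acos by auto.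
    rewrite Hs, Rabs_left by lra. split; auto; ring.
Qed.

Lemma rot_exists (g : R -> R -> R) (a b : R) : exists gam, forall be,
  g (cos be * a - sin be * (- b)) (sin be * a + cos be * (- b)) =
  g (cos (be + gam) * a - sin (be + gam) * b) (sin (be + gam) * a + cos (be + gam) * b).
Proof.
  destruct (Req_dec (a ^ 2 + b ^ 2) 0) as [H0|H0].
  - assert (a = 0) by nra. assert (b = 0) by nra. subst.
    exists 0. intros. f_equal; ring.
  - destruct (angle ((a ^ 2 - b ^ 2) / (a ^ 2 + b ^ 2)) (- 2 * a * b / (a ^ 2 + b ^ 2)))
      as [th [Hc Hs]].
    { field. auto. }
    exists th. intros be. rewrite cos_plus, sin_plus, Hc, Hs.
    f_equal; field; auto.
Qed.

Lemma cfst (phi : R -> R) : (forall x, continuous phi x) ->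
  forall p : R * R, continuous (fun z : R * R => phi (fst z)) p.
Proof. intros H [x y]. apply (continuous_comp fst phi). apply continuous_fst. apply H. Qed.
Lemma csnd (phi : R -> R) : (forall x, continuous phi x) ->
  forall p : R * R, continuous (fun z : R * R => phi (snd z)) p.
Proof. intros H [x y]. apply (continuous_comp snd phi). apply continuous_snd. apply H. Qed.
Lemma cmul (F G : R * R -> R) p : continuous F p -> continuous G p ->
  continuous (fun z => F z * G z) p.
Proof. intros. apply (continuous_mult F G p); auto. Qed.
Lemma csub (F G : R * R -> R) p : continuous F p -> continuous G p ->
  continuous (fun z => F z - G z) p.
Proof. intros. apply (continuous_minus F G p); auto. Qed.
Lemma cadd (F G : R * R -> R) p : continuous F p -> continuous G p ->
  continuous (fun z => F z + G z) p.
Proof. intros. apply (continuous_plus F G p); auto. Qed.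

Lemma jc_rot (g : R -> R -> R) p1 p2 q1 q2 : jc g ->
  (forall x, continuous p1 x) -> (forall x, continuous p2 x) ->
  (forall x, continuous q1 x) -> (forall x, continuous q2 x) ->
  jc (fun b t => g (p1 b * q1 t - p2 b * q2 t) (p2 b * q1 t + p1 b * q2 t)).
Proof.
  intros Hg H1 H2 H3 H4 x y.
  apply (continuous_comp_2 (fun z : R * R => p1 (fst z) * q1 (snd z) - p2 (fst z) * q2 (snd z))
           (fun z : R * R => p2 (fst z) * q1 (snd z) + p1 (fst z) * q2 (snd z)) g).
  - apply csub; apply cmul; try apply cfst; try apply csnd; auto.
  - apply cadd; apply cmul; try apply cfst; try apply csnd; auto.
  - apply Hg.
Qed.

Lemma cont_of_der (phi : R -> R) : (forall x, ex_derive phi x) -> forall x, continuous phi x.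
Proof. intros H x. apply (@ex_derive_continuous R_AbsRing R_NormedModule). auto. Qed.

Lemma rot_norm (be a b : R) :
  (cos be * a - sin be * b) ^ 2 + (sin be * a + cos be * b) ^ 2 = a ^ 2 + b ^ 2.
Proof.
  pose proof (sin2_cos2 be). unfold Rsqr in H.
  replace ((cos be * a - sin be * b) ^ 2 + (sin be * a + cos be * b) ^ 2)
    with ((sin be * sin be + cos be * cos be) * (a ^ 2 + b ^ 2)) by ring.
  rewrite H. ring.
Qed.

Lemma num_bound (t p r S : R) : 0 <= t -> 0 <= p <= r -> (t - p) ^ 2 <= S ->
  (1 + t) ^ 2 <= 2 * (1 + r) ^ 2 * (1 + S).
Proof.
  intros Ht Hp HS.
  assert (H1 : 0 <= 1 + t <= (1 + r) * (1 + Rabs (t - p))).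
  { split. lra. destruct (Rle_dec p t).
    - rewrite Rabs_pos_eq by lra. assert (0 <= r * (t - p)) by (apply Rmult_le_pos; lra). nra.
    - pose proof (Rabs_pos (t - p)). assert (0 <= (1 + r) * Rabs (t - p)) by (apply Rmult_le_pos; lra). nra. }
  assert (H2 : (1 + Rabs (t - p)) ^ 2 <= 2 * (1 + (t - p) ^ 2)).
  { pose proof (pow2_ge_0 (1 - Rabs (t - p))). rewrite <- (pow2_abs (t - p)). nra. }
  assert (H3 : (1 + t) ^ 2 <= (1 + r) ^ 2 * (1 + Rabs (t - p)) ^ 2).
  { rewrite <- Rpow_mult_distr. apply pow_incr. auto. }
  assert (0 <= (1 + r) ^ 2) by nra.
  nra.
Qed.

Lemma schwartz_bound f : schwartz f ->
  exists C, 0 <= C /\ forall x y, Rabs (f x y) <= C / (1 + x ^ 2 + y ^ 2).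
Proof.
  intros [_ [_ H3]].
  destruct (H3 nil 0%nat 0%nat) as [C0 H0].
  destruct (H3 nil 2%nat 0%nat) as [C1 H1].
  destruct (H3 nil 0%nat 2%nat) as [C2 H2].
  simpl in H0, H1, H2.
  exists (C0 + C1 + C2). split.
  - specialize (H0 0 0). specialize (H1 0 0). specialize (H2 0 0).
    pose proof (Rabs_pos (1 * 1 * f 0 0)). pose proof (Rabs_pos (0 * (0 * 1) * 1 * f 0 0)).
    pose proof (Rabs_pos (1 * (0 * (0 * 1)) * f 0 0)). lra.
  - intros x y.
    specialize (H0 x y). specialize (H1 x y). specialize (H2 x y).
    rewrite !Rabs_mult in H0, H1, H2. rewrite Rabs_R1 in H0, H1, H2.
    replace (x * (x * 1)) with (x ^ 2) in H1 by ring.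
    replace (y * (y * 1)) with (y ^ 2) in H2 by ring.
    rewrite (Rabs_pos_eq (x ^ 2)) in H1 by apply pow2_ge_0.
    rewrite (Rabs_pos_eq (y ^ 2)) in H2 by apply pow2_ge_0.
    assert (HD : 0 < 1 + x ^ 2 + y ^ 2) by (pose proof (pow2_ge_0 x); pose proof (pow2_ge_0 y); lra).
    apply (Rmult_le_reg_r (1 + x ^ 2 + y ^ 2)); auto.
    unfold Rdiv. rewrite Rmult_assoc, Rinv_l by lra. nra.
Qed.

Lemma fb_gen r f v be : fanbeam r f v be =
  RInt_gen (fun t => f (cos be * (r - t * r / sqrt (v ^ 2 + r ^ 2)) - sin be * (t * v / sqrt (v ^ 2 + r ^ 2)))
                       (sin be * (r - t * r / sqrt (v ^ 2 + r ^ 2)) + cos be * (t * v / sqrt (v ^ 2 + r ^ 2))))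
    (at_point 0) (Rbar_locally p_infty).
Proof.
  unfold fanbeam. cbv zeta.
  assert (E : (- v * sin be - r * cos be) ^ 2 + (v * cos be - r * sin be) ^ 2 = v ^ 2 + r ^ 2).
  { pose proof (sin2_cos2 be). unfold Rsqr in H.
    replace ((- v * sin be - r * cos be) ^ 2 + (v * cos be - r * sin be) ^ 2)
      with ((sin be * sin be + cos be * cos be) * (v ^ 2 + r ^ 2)) by ring.
    rewrite H. ring. }
  rewrite E. f_equal. apply functional_extensionality. intros t.
  f_equal; unfold Rdiv; ring.
Qed.

Lemma hb f C (Hf : forall x y, Rabs (f x y) <= C / (1 + x ^ 2 + y ^ 2)) be a b :
  Rabs (f (cos be * a - sin be * b) (sin be * a + cos be * b)) <= C / (1 + (a ^ 2 + b ^ 2)).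
Proof.
  rewrite <- (rot_norm be a b). rewrite <- Rplus_assoc. apply Hf.
Qed.

Lemma main_core r f u c : 0 < r -> schwartz f ->
  RInt (fun be => fanbeam r f u be) 0 (2 * PI) =
  RInt (fun be => fanbeam r f (- u) (be + c)) 0 (2 * PI).
Proof.
  intros Hr Hs.
  destruct (schwartz_bound f Hs) as [C [HC Hf]].
  assert (Hjf : jc f).
  { intros x y. destruct Hs as [_ [H2 _]]. exact (H2 nil x y). }
  set (N := sqrt (u ^ 2 + r ^ 2)).
  assert (HN2 : N ^ 2 = u ^ 2 + r ^ 2).
  { unfold N. rewrite pow2_sqrt; auto. pose proof (pow2_ge_0 u); pose proof (pow2_ge_0 r); lra. }
  assert (HNr : r <= N).
  { unfold N. rewrite <- (sqrt_pow2 r) at 1 by lra. apply sqrt_le_1_alt.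
    pose proof (pow2_ge_0 u); lra. }
  assert (HN : 0 < N) by lra.
  set (A := fun t => r - t * r / N).
  set (B := fun t => t * u / N).
  set (h1 := fun be t => f (cos be * A t - sin be * B t) (sin be * A t + cos be * B t)).
  set (h2 := fun be t => f (cos (be + c) * A t - sin (be + c) * (- B t))
                           (sin (be + c) * A t + cos (be + c) * (- B t))).
  assert (E1 : (fun be => fanbeam r f u be) =
               (fun be => RInt_gen (fun t => h1 be t) (at_point 0) (Rbar_locally p_infty))).
  { apply functional_extensionality. intros be. rewrite fb_gen. reflexivity. }
  assert (E2 : (fun be => fanbeam r f (- u) (be + c)) =
               (fun be => RInt_gen (fun t => h2 be t) (at_point 0) (Rbar_locally p_infty))).
  { apply functional_extensionality. intros be. rewrite fb_gen.
    replace ((- u) ^ 2) with (u ^ 2) by ring. fold N.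
    f_equal. apply functional_extensionality. intros t. unfold h2, A, B.
    f_equal; unfold Rdiv; ring. }
  rewrite E1, E2.
  assert (Hcos : forall x, continuous cos x) by (apply cont_of_der; intros; auto_derive; auto).
  assert (Hsin : forall x, continuous sin x) by (apply cont_of_der; intros; auto_derive; auto).
  assert (HA : forall x, continuous A x) by (apply cont_of_der; intros; unfold A; auto_derive; lra).
  assert (HB : forall x, continuous B x) by (apply cont_of_der; intros; unfold B; auto_derive; lra).
  assert (J1 : jc h1) by (apply jc_rot; auto).
  assert (J2 : jc h2).
  { apply (jc_rot f (fun be => cos (be + c)) (fun be => sin (be + c)) A (fun t => - B t)); auto.
    - apply cont_of_der; intros; auto_derive; auto.
    - apply cont_of_der; intros; auto_derive; auto.
    - apply cont_of_der; intros; unfold B; auto_derive; lra. }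
  set (M := C * (2 * (1 + r) ^ 2)).
  assert (KB : forall t, 0 <= t -> C / (1 + (A t ^ 2 + B t ^ 2)) <= M / (1 + t) ^ 2).
  { intros t Ht.
    assert (HS : (t - r ^ 2 / N) ^ 2 <= A t ^ 2 + B t ^ 2).
    { assert (Eq : A t ^ 2 + B t ^ 2 = (t - r ^ 2 / N) ^ 2 + r ^ 2 * (N ^ 2 - r ^ 2) / N ^ 2).
      { unfold A, B. replace ((t * u / N) ^ 2) with (t ^ 2 * u ^ 2 / N ^ 2) by (field; lra).
        replace (u ^ 2) with (N ^ 2 - r ^ 2) by lra. field. lra. }
      rewrite Eq. assert (0 <= r ^ 2 * (N ^ 2 - r ^ 2) / N ^ 2).
      { apply Rdiv_le_0_compat. apply Rmult_le_pos; nra. nra. }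
      lra. }
    assert (Hp : 0 <= r ^ 2 / N <= r).
    { split. apply Rdiv_le_0_compat; nra.
      apply (Rmult_le_reg_r N); auto. unfold Rdiv. rewrite Rmult_assoc, Rinv_l by lra. nra. }
    pose proof (num_bound t (r ^ 2 / N) r (A t ^ 2 + B t ^ 2) Ht Hp HS) as Hn.
    assert (0 <= A t ^ 2 + B t ^ 2) by (pose proof (pow2_ge_0 (A t)); pose proof (pow2_ge_0 (B t)); lra).
    assert (0 < (1 + t) ^ 2) by nra.
    set (D := 1 + (A t ^ 2 + B t ^ 2)) in *.
    assert (0 < D) by (unfold D; lra).
    apply (Rmult_le_reg_r ((1 + t) ^ 2 * D)). nra.
    replace (C / D * ((1 + t) ^ 2 * D)) with (C * (1 + t) ^ 2) by (field; lra).
    replace (M / (1 + t) ^ 2 * ((1 + t) ^ 2 * D)) with (C * (2 * (1 + r) ^ 2 * D)) by (unfold M; field; nra).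
    apply Rmult_le_compat_l; auto. }
  assert (B1 : forall be t, 0 <= t -> Rabs (h1 be t) <= M / (1 + t) ^ 2).
  { intros be t Ht. eapply Rle_trans. apply (hb f C Hf). apply KB; auto. }
  assert (B2 : forall be t, 0 <= t -> Rabs (h2 be t) <= M / (1 + t) ^ 2).
  { intros be t Ht. eapply Rle_trans. apply (hb f C Hf).
    replace ((- B t) ^ 2) with (B t ^ 2) by ring. apply KB; auto. }
  assert (P : forall t, RInt (fun be => h2 be t) 0 (2 * PI) = RInt (fun be => h1 be t) 0 (2 * PI)).
  { intros t.
    set (F2 := fun be => f (cos be * A t - sin be * (- B t)) (sin be * A t + cos be * (- B t))).
    set (F1 := fun be => h1 be t).
    assert (Hper : forall g : R -> R -> R, forall a b x,
      (fun be => g (cos be * a - sin be * b) (sin be * a + cos be * b)) (x + 2 * PI) =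
      (fun be => g (cos be * a - sin be * b) (sin be * a + cos be * b)) x).
    { intros. simpl. rewrite cos_plus, sin_plus, cos_2PI, sin_2PI. f_equal; ring. }
    assert (CF2 : forall x, continuous F2 x).
    { intros x. apply (jc_cont1 (fun be _ => F2 be)).
      - apply (jc_rot f cos sin (fun _ => A t) (fun _ => - B t)); auto;
          intros; apply continuous_const.
      - exact 0. }
    assert (CF1 : forall x, continuous F1 x).
    { intros x. apply (jc_cont1 h1 J1 t x). }
    change (RInt (fun be => F2 (be + c)) 0 (2 * PI) = RInt F1 0 (2 * PI)).
    rewrite (period_shift F2 CF2 (Hper f (A t) (- B t))).
    destruct (rot_exists f (A t) (B t)) as [gam Hg].
    rewrite (RInt_ext F2 (fun be => F1 (be + gam))).
    - apply period_shift; auto. apply Hper.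
    - intros x _. apply Hg. }
  assert (L1 := fubini_lim h1 M 0 (2 * PI) J1 B1).
  assert (L2 := fubini_lim h2 M 0 (2 * PI) J2 B2).
  assert (EP : (fun T => RInt (fun t => RInt (fun x => h2 x t) 0 (2 * PI)) 0 T) =
               (fun T => RInt (fun t => RInt (fun x => h1 x t) 0 (2 * PI)) 0 T)).
  { apply functional_extensionality. intros T. f_equal.
    apply functional_extensionality. intros t. apply P. }
  rewrite EP in L2.
  exact (filterlim_locally_unique _ _ _ L1 L2).
Qed.

Theorem proposition1 (r : R) (f : R -> R -> R) (hstar : R) :
  0 < r -> schwartz f ->
  let gt := fun s beta => fanbeam r f (s - hstar) beta in
  let pt := fun s => RInt (fun beta => gt s beta) 0 (2 * PI) in
  let w := fun s => RInt (fun beta => gt (- s) (beta + PI + 2 * atan (s / r))) 0 (2 * PI) in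
  forall s : R, pt s = w (s - 2 * hstar).
Proof.
  intros Hr Hs. cbv zeta. intros s. cbv beta.
  rewrite (main_core r f (s - hstar) (PI + 2 * atan ((s - 2 * hstar) / r)) Hr Hs).
  f_equal. apply functional_extensionality. intros be. f_equal; ring.
Qed.
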